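(* Let $\nabla$ be a symplectic self-duality of a locally compact abelian group $L$. If $L$ has a compact open subgroup, then $L$ has a compact open subgroup $G$ with $G=\{x\in L:\nabla(x)(g)=0\ \text{for all } g\in G\}$ (i.e. a compact open maximal isotropic subgroup).
   Context: $\mathbf T=\mathbf R/\mathbf Z$; $\hat L$ is the Pontryagin dual of a locally compact abelian group $L$. A symplectic self-duality of $L$ is an isomorphism of topological groups $\nabla:L\to\hat L$ with $\nabla(x)(x)=0$ for all $x\in L$. A subgroup $N$ is isotropic if $\nabla(x)(y)=0$ for all $x,y\in N$. *)

(* Defs.v *)
From HB Require Import structures.
From mathcomp Require Import all_boot all_order all_algebra generic_quotient.
From mathcomp Require Import all_classical all_reals all_analysis.
From mathcomp Require Import Rstruct Rstruct_topology.
Set Implicit Arguments. Unset Strict Implicit. Unset Printing Implicit Defensive.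
Import Order.TTheory GRing.Theory Num.Theory.
Local Open Scope classical_set_scope.
Local Open Scope ring_scope.
Local Open Scope quotient_scope.

Definition Rreal : realType := Rdefinitions.R.

Definition modZ_rel : rel Rreal := fun x y => (x - y) \is a Num.int.

Lemma modZ_refl : reflexive modZ_rel.
Proof. by move=> x; rewrite /modZ_rel subrr rpred0. Qed.

Lemma modZ_sym : symmetric modZ_rel.
Proof. by move=> x y; rewrite /modZ_rel -opprB rpredN. Qed.

Lemma modZ_trans : transitive modZ_rel.
Proof.
move=> y x z; rewrite /modZ_rel => hxy hyz.
by rewrite -(subrKA y) addrC; apply: rpredD.
Qed.

Definition modZ : equiv_rel Rreal := EquivRel modZ_rel modZ_refl modZ_sym modZ_trans.

Definition RmodZ := {eq_quot modZ}%qT.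
Definition TT : topologicalType := quotient_topology RmodZ.

Definition Tzero : TT := \pi_RmodZ (0 : Rreal).
Definition Tadd (a b : TT) : TT := \pi_RmodZ (repr a + repr b : Rreal).

(** * Pontryagin dual of a topological abelian group L:
    continuous homomorphisms L -> T, as a subset of the space L -> T
    carrying the compact-open topology. *)
Definition is_character (L : topologicalZmodType) (chi : L -> TT) : Prop :=
  continuous chi /\ forall x y : L, chi (x + y) = Tadd (chi x) (chi y).

Definition dual (L : topologicalZmodType) : set {compact-open, L -> TT} :=
  [set chi | is_character chi].
Arguments dual : clear implicits.

Definition LCA (L : topologicalZmodType) : Prop :=
  hausdorff_space L /\ locally_compact [set: L].

(** nabla : L -> hat L is an isomorphism of topological groups *)
Definition topgrp_iso_dual (L : topologicalZmodType) (nabla : L -> L -> TT) : Prop :=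
  [/\ (forall x, dual L (nabla x)),
      (forall x y z, nabla (x + y) z = Tadd (nabla x z) (nabla y z)),
      (injective nabla /\ forall chi, dual L chi -> exists x, nabla x = chi),
      continuous (nabla : L -> {compact-open, L -> TT})
    & (forall U : set L, open U ->                       (* open onto hat L *)
         exists V : set {compact-open, L -> TT}, open V /\ nabla @` U = V `&` dual L)].

Definition symplectic_self_duality (L : topologicalZmodType) (nabla : L -> L -> TT) : Prop :=
  topgrp_iso_dual nabla /\ forall x : L, nabla x x = Tzero.

Definition is_subgroup (L : zmodType) (G : set L) : Prop :=
  G 0 /\ forall x y, G x -> G y -> G (x - y).

Definition compact_open_subgroup (L : topologicalZmodType) (G : set L) : Prop :=
  [/\ is_subgroup G, compact G & open G].

(* Main.v *)
Require Import Defs.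
From HB Require Import structures.
From mathcomp Require Import all_boot all_order all_algebra generic_quotient finmap.
From mathcomp Require Import all_classical all_reals all_analysis.
From mathcomp Require Import Rstruct Rstruct_topology ring lra zify.
Set Implicit Arguments. Unset Strict Implicit. Unset Printing Implicit Defensive.
Import Order.TTheory GRing.Theory Num.Theory.
Local Open Scope classical_set_scope.
Local Open Scope ring_scope.
Local Open Scope quotient_scope.

Definition isZ (r : Rreal) : Prop := r \is a Num.int.
Definition piT (r : Rreal) : TT := \pi_RmodZ r.

Lemma piTE a b : piT a = piT b <-> isZ (a - b).
Proof.
split.
  by move=> h; apply/(@eqquotP _ _ RmodZ); exact: h.
by move=> h; apply/(@eqquotP _ _ RmodZ); exact: h.
Qed.

Lemma piT_repr (t : TT) : piT (repr t) = t.
Proof. exact: reprK. Qed.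

Lemma TaddE a b : Tadd (piT a) (piT b) = piT (a + b).
Proof.
rewrite /Tadd; apply/piTE.
have h1 : isZ (repr (piT a) - a) by apply/piTE; rewrite piT_repr.
have h2 : isZ (repr (piT b) - b) by apply/piTE; rewrite piT_repr.
have -> : repr (piT a) + repr (piT b) - (a + b) = (repr (piT a) - a) + (repr (piT b) - b) by ring.
exact: rpredD.
Qed.

Lemma TzeroE : Tzero = piT 0.
Proof. by []. Qed.

Section S.
Variables (L : topologicalZmodType) (nabla : L -> L -> TT).
Hypothesis hs : symplectic_self_duality nabla.

Definition cc x y : Rreal := repr (nabla x y).

Lemma nablaE x y : nabla x y = piT (cc x y).
Proof. by rewrite /cc piT_repr. Qed.

Lemma nabla0E x y : nabla x y = Tzero <-> isZ (cc x y).
Proof. rewrite nablaE TzeroE piTE subr0; done. Qed.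

Lemma cadd1 x y z : isZ (cc (x + y) z - (cc x z + cc y z)).
Proof.
case: hs => -[_ h _ _ _] _; apply/piTE; rewrite -TaddE -!nablaE; exact: h.
Qed.

Lemma cadd2 x y z : isZ (cc x (y + z) - (cc x y + cc x z)).
Proof.
case: hs => -[h _ _ _ _] _; apply/piTE; rewrite -TaddE -!nablaE.
by case: (h x) => _ ->.
Qed.

Lemma cdiag x : isZ (cc x x).
Proof. by case: hs => _ h; apply/nabla0E. Qed.

Lemma isZ_comb (a b e : Rreal) : isZ a -> isZ b -> (e = a + b \/ e = a - b) -> isZ e.
Proof. by rewrite /isZ => ha hb [->|->]; [apply: rpredD | apply: rpredB]. Qed.

Lemma isZN a : isZ a -> isZ (- a).
Proof. by rewrite /isZ rpredN. Qed.

Lemma c0r x : isZ (cc x 0).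
Proof.
have h := cadd2 x 0 0; rewrite addr0 in h.
have -> : cc x 0 = - (cc x 0 - (cc x 0 + cc x 0)) by ring.
exact: isZN.
Qed.

Lemma c0l x : isZ (cc 0 x).
Proof.
have h := cadd1 0 0 x; rewrite addr0 in h.
have -> : cc 0 x = - (cc 0 x - (cc 0 x + cc 0 x)) by ring.
exact: isZN.
Qed.

Lemma csub2 x y z : isZ (cc x (y - z) - (cc x y - cc x z)).
Proof.
have h := cadd2 x (y - z) z; rewrite subrK in h.
have -> : cc x (y - z) - (cc x y - cc x z) = - (cc x y - (cc x (y - z) + cc x z)) by ring.
exact: isZN.
Qed.

Lemma csub1 x y z : isZ (cc (x - y) z - (cc x z - cc y z)).
Proof.
have h := cadd1 (x - y) y z; rewrite subrK in h.
have -> : cc (x - y) z - (cc x z - cc y z) = - (cc x z - (cc (x - y) z + cc y z)) by ring.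
exact: isZN.
Qed.

Lemma canti a b : isZ (cc a b + cc b a).
Proof.
have h0 := cdiag (a + b).
have h1 := cadd1 a b (a + b).
have h2 := cadd2 a a b.
have h3 := cadd2 b a b.
have ha := cdiag a. have hb := cdiag b.
have -> : cc a b + cc b a =
  cc (a + b) (a + b) - (cc (a + b) (a + b) - (cc a (a + b) + cc b (a + b)))
  - (cc a (a + b) - (cc a a + cc a b)) - (cc b (a + b) - (cc b a + cc b b))
  - cc a a - cc b b by ring.
move: h0 h1 h2 h3 ha hb; rewrite /isZ => *.
by do 5 (apply: rpredB => //).
Qed.

Lemma cantiZ a b : isZ (cc a b) -> isZ (cc b a).
Proof.
move=> h; have -> : cc b a = (cc a b + cc b a) - cc a b by ring.
by rewrite /isZ; apply: rpredB => //; exact: canti.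
Qed.

End S.

Section S2.
Variables (L : topologicalZmodType) (nabla : L -> L -> TT).
Hypothesis hs : symplectic_self_duality nabla.

Local Notation cc := (cc nabla).
Definition perp (S : set L) := [set x | forall g, S g -> isZ (cc x g)].
Definition iso (S : set L) := forall a b, S a -> S b -> isZ (cc a b).

Lemma maximal_iso (U0 : set L) : iso U0 ->
  exists M : set L, [/\ U0 `<=` M, iso M & perp M `<=` M].
Proof.
move=> isoU.
pose P := fun A : set L => iso (A `|` U0).
have [|A [PA Amax]] := @Zorn_bigcup L P.
  move=> F FP tot a b [Ha|Ha] [Hb|Hb].
  - case: Ha => X FX Xa; case: Hb => Y FY Yb.
    case: (tot X Y FX FY) => XY.
      by apply: (FP Y FY); left => //; apply: XY.
    by apply: (FP X FX); [left|left; apply: XY].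
  - case: Ha => X FX Xa; by apply: (FP X FX); [left|right].
  - case: Hb => X FX Xb; by apply: (FP X FX); [right|left].
  - exact: isoU.
have key : perp (A `|` U0) `<=` A.
  move=> z zp; apply: contrapT => zA.
  apply: (Amax (A `|` [set z])).
    split; first by move=> x Ax; left.
    by move=> /(_ z (or_intror erefl)).
  move=> a b Ha Hb.
  have inA : forall x, (A `|` [set z] `|` U0) x -> (A `|` U0) x \/ x = z.
    by move=> x [[Ax|->]|Ux]; [left; left|right|left; right].
  case: (inA a Ha) => [aa|->]; case: (inA b Hb) => [bb|->].
  - exact: PA.
  - by apply: (cantiZ hs); apply: zp.
  - exact: zp.
  - exact: (cdiag hs).
have UA : U0 `<=` A by move=> u Uu; apply: key => g Hg; apply: PA => //; right.
have AU : A `|` U0 = A by apply/seteqP; split => x; [case=> // /UA|left].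
exists A; split => //; first by rewrite -AU.
by rewrite -{1}AU.
Qed.

Lemma iso_perp_sub (M : set L) : iso M -> M `<=` perp M.
Proof. by move=> h x Mx g Mg; apply: h. Qed.

Lemma isZ_fromB (e a b : Rreal) : isZ (e - (a - b)) -> isZ a -> isZ b -> isZ e.
Proof.
rewrite /isZ => h ha hb; have -> : e = (e - (a - b)) + (a - b) by ring.
by apply: rpredD => //; apply: rpredB.
Qed.

Lemma max_subgroup (M : set L) : iso M -> M 0 -> perp M `<=` M -> is_subgroup M.
Proof.
move=> iM M0 pM; split => // x y Mx My; apply: pM => g Mg.
apply: (isZ_fromB (csub1 hs x y g)); exact: iM.
Qed.

Lemma perp_subgroup (S : set L) : is_subgroup (perp S).
Proof.
split; first by move=> g _; exact: (c0l hs).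
move=> x y px py g Sg; apply: (isZ_fromB (csub1 hs x y g)); [exact: px|exact: py].
Qed.

Lemma subr_cont (r : L) : continuous (fun y : L => y - r).
Proof.
move=> x; apply: (@continuous_comp _ _ _ (fun y => (y, r)) (fun p : L * L => p.1 - p.2)).
  by apply: cvg_pair => /=; [exact: cvg_id | exact: cvg_cst].
exact: sub_continuous.
Qed.

Lemma open_translate (U : set L) (k : L) : open U -> open [set y | U (y - k)].
Proof.
move=> oU; have -> : [set y | U (y - k)] = (fun y => y - k) @^-1` U by [].
apply: open_comp => // y _; exact: subr_cont.
Qed.

Lemma open_subgroup (S W : set L) : is_subgroup S -> open W -> W 0 -> W `<=` S -> open S.
Proof.
move=> [S0 Ssub] oW W0 WS.
have -> : S = \bigcup_(u in S) ((fun y => y - u) @^-1` W).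
  apply/seteqP; split => x.
    by move=> Sx; exists x => //=; rewrite subrr.
  case=> u Su /= /WS h; have -> : x = (x - u) - (0 - u) by rewrite sub0r opprK subrK.
  by apply: (Ssub) => //; apply: (Ssub).
apply: (@bigcup_open L) => u _; apply: open_comp => // y _; exact: subr_cont.
Qed.

Lemma subgroup_closed (S : set L) : is_subgroup S -> open S -> closed S.
Proof.
move=> [S0 Ssub] oS.
have -> : S = ~` (\bigcup_(u in ~` S) ((fun y => y - u) @^-1` S)).
  apply/seteqP; split => x.
    move=> Sx [u nSu /= h]; apply: nSu.
    have -> : u = x - (x - u) by rewrite opprB addrC subrK.
    exact: (Ssub).
  move=> h; apply: contrapT => nSx; apply: h; exists x => //=; rewrite subrr.
  by [].
apply: open_closedC; apply: (@bigcup_open L) => u _; apply: open_comp => // y _; exact: subr_cont.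
Qed.

Lemma translate_compact (H : set L) (r : L) : compact H -> compact [set y | H (y - r)].
Proof.
move=> cH.
have -> : [set y | H (y - r)] = [set (fun h => h - (- r)) h | h in H].
  apply/seteqP; split => y.
    by move=> Hy; exists (y - r) => //; rewrite opprK subrK.
  by case=> h Hh <- /=; rewrite opprK addrK.
apply: continuous_compact => //; apply: continuous_subspaceT; exact: subr_cont.
Qed.

End S2.

Definition nearZ (e r : Rreal) : Prop := exists n : int, `|r - n%:~R| < e.

Lemma nearZ_shift e r s : nearZ e r -> isZ (s - r) -> nearZ e s.
Proof.
move=> [n hn] hz; exists (n + Num.floor (s - r)).
have -> : s - (n + Num.floor (s - r))%:~R = r - n%:~R.
  rewrite intrD (floorK hz); ring.
done.
Qed.

Lemma isZ_nearZ e r : 0 < e -> isZ r -> nearZ e r.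
Proof. move=> e0 hr; exists (Num.floor r); by rewrite (floorK hr) subrr normr0. Qed.

Lemma int_small (m : int) : `|(m%:~R : Rreal)| < 1 -> m = 0.
Proof.
move=> h.
have : (m = 0) \/ (1 <= m)%R \/ (m <= -1)%R by lia.
case=> [//|[h1|h1]].
- have : (1 : Rreal) <= m%:~R by rewrite -(ler_int Rreal) in h1.
  move: h; rewrite ltr_norml => /andP[_ a1] a2.
  by have := le_lt_trans a2 a1; rewrite ltxx.
- have : (m%:~R : Rreal) <= -1 by rewrite -(ler_int Rreal) in h1.
  move: h; rewrite ltr_norml => /andP[a1 _] a2.
  by have := lt_le_trans a1 a2; rewrite ltxx.
Qed.

Lemma no_small_sub (t : Rreal) : (forall n : nat, nearZ (1/4) (n%:R * t)) -> isZ t.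
Proof.
move=> h; have [k hk] := h 1%N.
set d := t - k%:~R in hk.
have tE : t = k%:~R + d by rewrite /d; ring.
have [d0|dn0] := eqVneq d 0.
  by rewrite /isZ tE d0 addr0 rpred_int.
have hd : `|d| < 1/4 by move: hk; rewrite /d !mul1r.
have ad : 0 < `|d| by rewrite normr_gt0.
pose P := fun n : nat => (1/4 : Rreal) <= n%:R * `|d|.
have exP : exists n, P n.
  exists (Num.Def.archi_bound (`|d|^-1)); rewrite /P.
  have ad' : 0 <= `|d|^-1 by rewrite invr_ge0 ltW.
  have := archi_boundP ad' => hb.
  have : 1 < (Num.Def.archi_bound `|d|^-1)%:R * `|d|.
    by rewrite -ltr_pdivrMr // div1r.
  lra.
have [n Pn nmin] := ex_minnP exP.
case: n Pn nmin => [|n] Pn nmin.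
  by move: Pn; rewrite /P mul0r; lra.
have hn : n%:R * `|d| < 1/4.
  rewrite ltNge; apply/negP => hle; have := nmin n hle; rewrite ltnn //.
have hn2 : n.+1%:R * `|d| < 1/2 by rewrite -addn1 natrD mulrDl mul1r; lra.
have [m hm] := h n.+1.
have e1 : n.+1%:R * t - m%:~R = (n.+1%:R * k%:~R - m%:~R) + n.+1%:R * d by rewrite tE; ring.
have := nearZ_shift (s := n.+1%:R * d) (ex_intro _ m hm).
case.
  have -> : n.+1%:R * d - n.+1%:R * t = - (n.+1%:R * k%:~R) by rewrite tE; ring.
  by rewrite /isZ rpredN rpredM ?rpred_int // rpred_nat.
move=> m' hm'.
have nd : `|n.+1%:R * d| = n.+1%:R * `|d| by rewrite normrM normr_nat.
have : `|(m'%:~R : Rreal)| < 1.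
  have := ler_normB (n.+1%:R * d) (n.+1%:R * d - m'%:~R).
  have -> : n.+1%:R * d - (n.+1%:R * d - m'%:~R) = (m'%:~R : Rreal) by ring.
  move=> hh; apply: (le_lt_trans hh); rewrite nd.
  apply: (lt_le_trans (ltrD hn2 hm')); lra.
move=> /int_small m0; move: hm' Pn; rewrite /P m0 subr0 nd.
generalize (n.+1%:R * `|d|) => X; lra.
Qed.

Lemma open_nearZ e : open ([set t : TT | nearZ e (repr t)]).
Proof.
change (open (piT @^-1` [set t : TT | nearZ e (repr t)])).
have -> : piT @^-1` [set t : TT | nearZ e (repr t)] =
    \bigcup_(n in [set: int]) ball (n%:~R : Rreal) e.
  apply/seteqP; split => s /=.
    move=> h; have : nearZ e s.
      by apply: (nearZ_shift h); apply/piTE; rewrite piT_repr.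
    case=> n hn; exists n => //; rewrite /ball /= distrC //.
  case=> n _; rewrite /ball /= => hn.
  apply: (nearZ_shift (r := s)); first by exists n; rewrite distrC.
  by apply/piTE; rewrite piT_repr.
apply: bigcup_open => n _; exact: (@ball_open _ Rreal^o).
Qed.

Lemma open_pre (O : set TT) : open O -> O Tzero ->
  exists2 del : Rreal, 0 < del & forall r, `|r| < del -> O (piT r).
Proof.
move=> oO O0.
have oO' : open (piT @^-1` O) by exact: oO.
have : nbhs (0 : Rreal) (piT @^-1` O) by apply: open_nbhs_nbhs; split.
move/nbhs_ballP => [e e0 he]; exists e => // r hr; apply: he.
by rewrite /ball /= sub0r normrN.
Qed.

Section S3.
Variables (L : topologicalZmodType) (nabla : L -> L -> TT).
Hypothesis hs : symplectic_self_duality nabla.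
Local Notation cc := (cc nabla).
Local Notation perp := (perp nabla).

Lemma nabla0 y : nabla 0 y = Tzero.
Proof. by apply/(nabla0E nabla); exact: (c0l hs). Qed.

Lemma cmuln x h n : isZ (cc x (h *+ n) - n%:R * cc x h).
Proof.
elim: n => [|n IH].
  by rewrite mulr0n mul0r subr0; exact: (c0r hs).
have h1 := cadd2 hs x h (h *+ n).
rewrite mulrS.
have -> : cc x (h + h *+ n) - n.+1%:R * cc x h =
   (cc x (h + h *+ n) - (cc x h + cc x (h *+ n))) + (cc x (h *+ n) - n%:R * cc x h).
  by rewrite -addn1 natrD; ring.
by move: h1 IH; rewrite /isZ => *; apply: rpredD.
Qed.

Lemma subgroup_muln (S : set L) h n : is_subgroup S -> S h -> S (h *+ n).
Proof.
move=> [S0 Ss] Sh; elim: n => [|n IH]; first by rewrite mulr0n.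
rewrite mulrS; have -> : h + h *+ n = h - (0 - h *+ n) by rewrite sub0r opprK.
by apply: (Ss) => //; apply: (Ss).
Qed.

Lemma TzeroO e : 0 < e -> nearZ e (repr Tzero).
Proof.
move=> e0; apply: isZ_nearZ => //.
have : isZ (repr (piT 0) - 0) by apply/piTE; rewrite piT_repr.
by rewrite subr0.
Qed.

Lemma perp_nbhs (H : set L) : compact H -> is_subgroup H ->
  exists W : set L, [/\ open W, W 0 & W `<=` perp H].
Proof.
move=> cH sH.
case: hs => -[_ _ _ cont _] _.
pose O14 := [set t : TT | nearZ (1/4) (repr t)].
pose G := [set g : {compact-open, L -> TT} | [set g x | x in H] `<=` O14].
have oG : open G by apply: compact_open_open => //; exact: open_nearZ.
exists ((nabla : L -> {compact-open, L -> TT}) @^-1` G); split.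
- by move/continuousP: cont; apply.
- move=> _ [y Hy <-] /=; rewrite /O14 /= nabla0; apply: TzeroO; lra.
- move=> x Gx h Hh; apply: no_small_sub => n.
  have : O14 (nabla x (h *+ n)).
    by apply: Gx; exists (h *+ n) => //; exact: subgroup_muln.
  rewrite /O14 /= => hn; apply: (nearZ_shift hn).
  have := cmuln x h n; rewrite /isZ => hh.
  have -> : n%:R * cc x h - repr (nabla x (h *+ n)) = - (cc x (h *+ n) - n%:R * cc x h) by rewrite /cc; ring.
  by rewrite rpredN.
Qed.

End S3.

Definition fr (r : Rreal) : Rreal := r - (Num.floor r)%:~R.
Definition idx (N : nat) (r : Rreal) : 'I_N.+1 := inord `|Num.floor (N.+1%:R * fr r)|%N.

Lemma isZ_fr r : isZ (r - fr r).
Proof. rewrite /fr /isZ; have -> : r - (r - (Num.floor r)%:~R) = (Num.floor r)%:~R by ring.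
exact: rpred_int. Qed.

Lemma fr_itv r : 0 <= fr r < 1.
Proof.
rewrite /fr; have := floor_itv r; rewrite intrD => /andP[h1 h2].
apply/andP; split; lra.
Qed.

Lemma idx_eq N a b : idx N a = idx N b -> `|fr a - fr b| < N.+1%:R^-1.
Proof.
set M : Rreal := N.+1%:R.
have M0 : 0 < M by rewrite /M ltr0n.
have hz : forall r, 0 <= Num.floor (M * fr r) /\ (`|Num.floor (M * fr r)|%N < N.+1)%N.
  move=> r; have /andP[f0 f1] := fr_itv r.
  have m0 : 0 <= M * fr r by rewrite mulr_ge0 // ltW.
  have m1 : M * fr r < M by rewrite -[X in _ < X]mulr1 ltr_pM2l.
  have z0 : 0 <= Num.floor (M * fr r) by rewrite floor_ge0.
  split => //.
  have : Num.floor (M * fr r) < N.+1%:Z.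
    by rewrite floor_lt_int /M -pmulrn.
  lia.
move=> e.
have [za1 za2] := hz a; have [zb1 zb2] := hz b.
have : `|Num.floor (M * fr a)|%N = `|Num.floor (M * fr b)|%N.
  move: e; rewrite /idx -/M => /(congr1 val); rewrite /= !inordK //.
move=> eab.
have zeq : Num.floor (M * fr a) = Num.floor (M * fr b) by lia.
have := floor_itv (M * fr a); have := floor_itv (M * fr b).
rewrite zeq intrD.
move=> /andP[h1 h2] /andP[h3 h4].
have hu : `|M * (fr a - fr b)| < 1.
  rewrite ltr_norml; apply/andP; split.
    have -> : M * (fr a - fr b) = M * fr a - M * fr b by ring.
    move: h1 h2 h3 h4; generalize (M * fr a) (M * fr b) ((Num.floor (M * fr b))%:~R : Rreal) => X Y Z; lra.
  have -> : M * (fr a - fr b) = M * fr a - M * fr b by ring.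
  move: h1 h2 h3 h4; generalize (M * fr a) (M * fr b) ((Num.floor (M * fr b))%:~R : Rreal) => X Y Z; lra.
rewrite -(ltr_pM2l M0) mulfV; last by rewrite gt_eqF.
by move: hu; rewrite normrM gtr0_norm.
Qed.

Lemma bigsetU_in (T : Type) (I : eqType) (F : I -> set T) (s : seq I) (i : I) (x : T) :
  i \in s -> F i x -> (\big[setU/set0]_(j <- s) F j) x.
Proof.
elim: s => [//|a s IH]; rewrite in_cons => /orP[/eqP->|hi] hx; rewrite big_cons.
  by left.
by right; apply: IH.
Qed.

Definition ptT (T : topologicalType) (t : T) : Type := T.
HB.instance Definition _ (T : topologicalType) (t : T) := Topological.copy (ptT t) T.
HB.instance Definition _ (T : topologicalType) (t : T) := isPointed.Build (ptT t) t.

Lemma compact_cover' (T : topologicalType) (t : T) (A : set T) : compact A -> cover_compact A.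
Proof.
move=> cA.
have : @compact (ptT t) A := cA.
rewrite compact_cover; exact.
Qed.

Section S4.
Variables (L : topologicalZmodType) (nabla : L -> L -> TT).
Hypothesis hs : symplectic_self_duality nabla.
Local Notation cc := (cc nabla).
Local Notation perp := (perp nabla).

Lemma basic_nbhs (V : set {compact-open, L -> TT}) :
  open V -> V (nabla 0 : {compact-open, L -> TT}) ->
  exists K O, [/\ compact K, open O, O Tzero &
     forall g : {compact-open, L -> TT}, (forall k, K k -> O (g k)) -> V g].
Proof.
move=> oV V0.
pose I := [set p : set L * set TT | [/\ compact p.1, open p.2 & p.2 Tzero]].
pose B := fun p : set L * set TT =>
  [set g : {compact-open, L -> TT} | [set g x | x in p.1] `<=` p.2].
have FF : Filter (filter_from I B).
  apply: filter_from_filter.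
    exists (set0, setT); split => //; [exact: compact0 | exact: openT].
  move=> i j [ci oi zi] [cj oj zj]; exists (i.1 `|` j.1, i.2 `&` j.2).
    split => /=; [exact: compactU | exact: openI | by split].
  move=> g hg; split => _ [x hx <-].
    by have [] := hg (g x) (ex_intro2 _ _ x (or_introl hx) erefl).
  by have [] := hg (g x) (ex_intro2 _ _ x (or_intror hx) erefl).
have cv : filter_from I B --> (nabla 0 : {compact-open, L -> TT}).
  apply/compact_open_cvgP => K O cK oO sub.
  case: (pselect (exists k, K k)) => [[k Kk]|nK].
    exists (K, O) => //; split => //.
    by have := sub (nabla 0 k) (ex_intro2 _ _ k Kk erefl); rewrite nabla0.
  exists (set0, setT); first by split => //; [exact: compact0 | exact: openT].
  by move=> g _ t [x Kx _]; exfalso; apply: nK; exists x.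
have : nbhs (nabla 0 : {compact-open, L -> TT}) V by apply: open_nbhs_nbhs; split.
move/cv => [[K O] [cK oO O0] hB].
exists K, O; split => // g hg; apply: hB => _ [x Kx <-]; exact: hg.
Qed.

End S4.

Section S5.
Variables (L : topologicalZmodType) (nabla : L -> L -> TT).
Hypothesis hs : symplectic_self_duality nabla.
Local Notation cc := (cc nabla).
Local Notation perp := (perp nabla).

Lemma perp_bounded (H U0 : set L) : is_subgroup H -> compact H -> open H ->
  is_subgroup U0 -> open U0 -> exists C, compact C /\ perp U0 `<=` C.
Proof.
move=> sH cH oH [U00 sU] oU.
have hs' := hs.
case: hs' => -[hd _ [hinj _] _ hopen] _.
have [V [oV eV]] := hopen H oH.
have V0 : V (nabla 0 : {compact-open, L -> TT}).
  have : (nabla @` H) (nabla 0) by exists 0 => //; case: sH.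
  by rewrite eV => -[].
have [K [Oo [cK oO O0 hKO]]] := basic_nbhs hs oV V0.
have [del del0 hdel] := open_pre oO O0.
have cov : K `<=` \bigcup_(k in K) [set y | U0 (y - k)].
  by move=> k Kk; exists k => //=; rewrite subrr.
have cK' := compact_cover' 0 cK.
have [D' D'K KD'] := cK' L K (fun k => [set y | U0 (y - k)])
  (fun k _ => open_translate k oU) cov.
pose N := Num.Def.archi_bound (del^-1).
have hN : N.+1%:R^-1 < del.
  have ad' : 0 <= del^-1 by rewrite invr_ge0 ltW.
  have := archi_boundP ad' => hb.
  have hb' : del^-1 < N.+1%:R by apply: (lt_le_trans hb); rewrite ler_nat.
  rewrite -[X in _ < X]invrK ltf_pV2 // posrE ?ltr0n ?invr_gt0 //.
pose Phi := fun x : L => [ffun f : D' => idx N (cc x (fsval f))].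
pose rep := fun s : {ffun D' -> 'I_N.+1} => xget 0 [set x | perp U0 x /\ Phi x = s].
exists (\big[setU/set0]_(s <- enum {ffun D' -> 'I_N.+1}) [set y | H (y - rep s)]).
split.
  by apply: bigsetU_compact => s _; exact: translate_compact.
move=> x px.
apply: (@bigsetU_in _ _ _ _ (Phi x)); first by rewrite mem_enum.
rewrite /rep; case: xgetP => [y _ [py Py]|/(_ x) nP]; last by exfalso; apply: nP.
have hV : V (nabla (x - y) : {compact-open, L -> TT}).
  apply: hKO => k Kk.
  have [f fD Uf] := KD' k Kk.
  have fD' : f \in D' by exact: fD.
  have e : Phi y (FSetSub fD') = Phi x (FSetSub fD') by rewrite Py.
  rewrite /Phi !ffunE /= in e.
  have hc := idx_eq e; rewrite distrC in hc.
  rewrite nablaE.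
  have -> : piT (cc (x - y) k) = piT (fr (cc x f) - fr (cc y f)).
    apply/piTE.
    have h1 := csub1 hs x y k.
    have ek : f + (k - f) = k by rewrite addrC subrK.
    have h2 := cadd2 hs x f (k - f); rewrite ek in h2.
    have h3 := cadd2 hs y f (k - f); rewrite ek in h3.
    have h4 := px (k - f) Uf.
    have h5 := py (k - f) Uf.
    have h6 := isZ_fr (cc x f).
    have h7 := isZ_fr (cc y f).
    have -> : cc (x - y) k - (fr (cc x f) - fr (cc y f)) =
      (cc (x - y) k - (cc x k - cc y k)) + (cc x k - (cc x f + cc x (k - f)))
      - (cc y k - (cc y f + cc y (k - f))) + cc x (k - f) - cc y (k - f)
      + (cc x f - fr (cc x f)) - (cc y f - fr (cc y f)) by ring.
    move: h1 h2 h3 h4 h5 h6 h7; rewrite /isZ => h1 h2 h3 h4 h5 h6 h7.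
    apply: rpredB => //; apply: rpredD => //; apply: rpredB => //.
    apply: rpredD => //; apply: rpredB => //; apply: rpredD => //.
  apply: hdel; exact: lt_trans hc hN.
have : (nabla @` H) (nabla (x - y)) by rewrite eV; split => //; exact: hd.
case=> h Hh /hinj e; rewrite /= -e; exact: Hh.
Qed.

End S5.

Theorem lemma7p3 (L : topologicalZmodType) (nabla : L -> L -> TT) :
  LCA L -> symplectic_self_duality nabla ->
  (exists H : set L, compact_open_subgroup H) ->
  exists G : set L, compact_open_subgroup G /\
    G = [set x : L | forall g, G g -> nabla x g = Tzero].
Proof.
move=> _ hs [H [sH cH oH]].
have [W [oW W0 Wp]] := perp_nbhs hs cH sH.
pose U0 := H `&` perp nabla H.
have H0 : H 0 by case: sH.
have sU0 : is_subgroup U0.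
  split; first by split => //; case: (perp_subgroup hs H).
  move=> x y [Hx px] [Hy py]; split; first by case: sH => _; apply.
  by case: (perp_subgroup hs H) => _; apply.
have U00 : U0 0 by case: sU0.
have oU0 : open U0.
  apply: (open_subgroup sU0 (openI oH oW)); first by split.
  by move=> x [hx wx]; split => //; exact: Wp.
have iU0 : iso nabla U0 by move=> a b [_ pa] [hb _]; exact: pa.
have [M [UM iM pM]] := maximal_iso hs iU0.
have sM := max_subgroup hs iM (UM 0 U00) pM.
have oM := open_subgroup sM oU0 U00 UM.
have clM := subgroup_closed sM oM.
have [C [cC pC]] := perp_bounded hs sH cH oH sU0 oU0.
exists M; split.
  split => //; apply: (subclosed_compact clM cC) => x Mx; apply: pC.
  by move=> g Ug; apply: iM => //; exact: UM.
apply/seteqP; split => x /=.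
  by move=> Mx g Mg; apply/(nabla0E nabla); exact: iM.
by move=> h; apply: pM => g Mg; apply/(nabla0E nabla); exact: h.
Qed.
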